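(* Let $S_1$ be a set with $|S_1| \le k$ satisfying $g(S_1) \ge (1 - 1/e)\max_{S \subseteq V, |S| \le k} g(S)$ (e.g., the output of the classic greedy algorithm), and let $S_2 = \{u,v\}$ with $\mathrm{dist}(u,v) = d_{\max}$, and assume $k \ge 2$. Then $$\max\{f(S_1), f(S_2)\} \ge \frac{e-1}{2e-1}\cdot \mathrm{OPT} \;(\approx 0.387\cdot\mathrm{OPT}).$$
   Context: Let $V$ be a finite set of $n$ points in a metric space with metric $\mathrm{dist}$, and let $d_{\max} = \max_{u,v \in V}\mathrm{dist}(u,v)$. The max-min diversity is $\mathrm{div}(S) = \min_{u,v \in S,\, u \ne v}\mathrm{dist}(u,v)$ if $|S| \ge 2$, and $\mathrm{div}(S) = d_{\max}$ if $|S| \le 1$. Let $g : 2^V \to \mathbb{R}_{\ge 0}$ be a nonnegative monotone submodular function, $\lambda \ge 0$, $k \ge 1$ an integer, and $f(S) = g(S) + \lambda\cdot \mathrm{div}(S)$. $\mathrm{OPT} = \max_{S \subseteq V, |S| \le k} f(S)$. *)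

(* Defs.v *)
From HB Require Import structures.
From mathcomp Require Import all_boot all_order all_algebra.
From mathcomp Require Import all_classical all_reals all_analysis.
Set Implicit Arguments. Unset Strict Implicit. Unset Printing Implicit Defensive.
Import Order.TTheory GRing.Theory Num.Theory.
Local Open Scope ring_scope.

Section Defs.
Variables (R : realType) (T : finType).

Definition is_metric (dist : T -> T -> R) : Prop :=
  [/\ forall x, dist x x = 0,
      forall x y, x != y -> 0 < dist x y,
      forall x y, dist x y = dist y x &
      forall x y z, dist x z <= dist x y + dist y z].

(* d_max = max_{u,v} dist(u,v)  (distances are >= 0, so 0 is a neutral start) *)
Definition dmax (dist : T -> T -> R) : R :=
  \big[Num.max/0]_(u : T) \big[Num.max/0]_(v : T) dist u v.

(* max-min diversity: min over distinct pairs of S if |S| >= 2, d_max otherwise.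
   dmax is an upper bound of all distances, so it is a harmless neutral element. *)
Definition div (dist : T -> T -> R) (S : {set T}) : R :=
  if (2 <= #|S|)%N then
    \big[Num.min/dmax dist]_(u in S) \big[Num.min/dmax dist]_(v in S | v != u) dist u v
  else dmax dist.

Definition nonneg_fun (g : {set T} -> R) : Prop := forall A : {set T}, 0 <= g A.
Definition monotone_fun (g : {set T} -> R) : Prop :=
  forall A B : {set T}, A \subset B -> g A <= g B.
Definition submodular (g : {set T} -> R) : Prop :=
  forall A B : {set T}, g (A :|: B) + g (A :&: B) <= g A + g B.

Definition fobj (g : {set T} -> R) (lam : R) (dist : T -> T -> R) (S : {set T}) : R :=
  g S + lam * div dist S.

(* max over S with |S| <= k of h S (h >= 0 and set0 is feasible, so 0 is neutral) *)
Definition maxk (k : nat) (h : {set T} -> R) : R :=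
  \big[Num.max/0]_(S : {set T} | (#|S| <= k)%N) h S.

Definition OPT (g : {set T} -> R) (lam : R) (dist : T -> T -> R) (k : nat) : R :=
  maxk k (fobj g lam dist).
End Defs.

(* Main.v *)
Require Import Defs.
From HB Require Import structures.
From mathcomp Require Import all_boot all_order all_algebra.
From mathcomp Require Import all_classical all_reals all_analysis.
From mathcomp Require Import ring lra.
Import Order.TTheory GRing.Theory Num.Theory.
Local Open Scope ring_scope.

Theorem mainTheorem9 (R : realType) (T : finType) (dist : T -> T -> R)
  (g : {set T} -> R) (lam : R) (k : nat) (S1 : {set T}) (u v : T) :
  is_metric dist ->
  nonneg_fun g -> monotone_fun g -> submodular g ->
  0 <= lam ->
  (2 <= k)%N ->
  (#|S1| <= k)%N ->
  (1 - 1 / expR 1) * maxk k g <= g S1 ->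
  dist u v = dmax dist ->
  (expR 1 - 1) / (2 * expR 1 - 1) * OPT g lam dist k
    <= Num.max (fobj g lam dist S1) (fobj g lam dist [set u; v]).
Proof.
move=> [d0 dpos dsym dtri] gnn _ _ lam0 _ S1k hS1 huv.
set D := dmax dist.
set G := maxk k g.
have dnn : forall x y, 0 <= dist x y.
  move=> x y; case: (eqVneq x y) => [->|hxy]; first by rewrite d0.
  exact/ltW/dpos.
have G0 : 0 <= G.
  by apply: (big_ind (fun y => 0 <= y)) => // x y hx hy; rewrite le_max hx.
have D0 : 0 <= D.
  apply: (big_ind (fun y => 0 <= y)) => // [x y hx hy|i _]; first by rewrite le_max hx.
  apply: (big_ind (fun y => 0 <= y)) => // x y hx hy; by rewrite le_max hx.
have divle : forall S, div dist S <= D.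
  move=> S; rewrite /div; case: ifP => _ //.
  apply: (big_ind (fun y => y <= D)) => // [x y hx hy|i _]; first by rewrite ge_min hx.
  apply: (big_ind (fun y => y <= D)) => // [x y hx hy|j _]; first by rewrite ge_min hx.
  apply: le_trans (le_bigmax _ _ i); exact: (le_bigmax _ (fun v => dist i v) j).
have gle : forall S : {set T}, (#|S| <= k)%N -> g S <= G.
  move=> S hS; rewrite /G /maxk (bigD1 S) //=; by rewrite le_max lexx.
have hOPT : OPT g lam dist k <= G + lam * D.
  apply: bigmax_le; first by apply: addr_ge0 => //; apply: mulr_ge0.
  move=> S hS; rewrite /fobj; apply: lerD; first exact: gle.
  by apply: ler_wpM2l => //; apply: divle.
have Duv : D <= dist u v by rewrite huv.
have div2 : D <= div dist [set u; v].
  rewrite /div; case: ifP => // _.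
  apply: (big_ind (fun y => D <= y)) => // [x y hx hy|a ha]; first by rewrite le_min hx.
  apply: (big_ind (fun y => D <= y)) => // [x y hx hy|b /andP[hb hba]]; first by rewrite le_min hx.
  move: ha hb; rewrite !inE => /orP[]/eqP ea /orP[]/eqP eb; rewrite ea eb in hba *;
    rewrite ?eqxx // in hba.
    all: try exact: Duv.
  by rewrite dsym.
set X := Num.max (fobj g lam dist S1) (fobj g lam dist [set u; v]).
have divge0 : forall S, 0 <= div dist S.
  move=> S; rewrite /div; case: ifP => // _.
  apply: (big_ind (fun y => 0 <= y)) => //; first by move=> x y hx hy; rewrite le_min hx.
  move=> i _; apply: (big_ind (fun y => 0 <= y)) => //; first by move=> x y hx hy; rewrite le_min hx.
have hf1 : g S1 <= fobj g lam dist S1.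
  by rewrite /fobj lerDl; apply: mulr_ge0.
have hm1 : fobj g lam dist S1 <= X by rewrite /X le_max lexx.
have h1 : (1 - 1 / expR 1) * G <= X := le_trans hS1 (le_trans hf1 hm1).
have h2 : lam * D <= X.
  have hm2 : fobj g lam dist [set u; v] <= X by rewrite /X le_max lexx orbT.
  apply: le_trans hm2.
  rewrite /fobj.
  apply: le_trans (ler_wpM2l lam0 div2) _; rewrite lerDr; exact: gnn.
have e1 : 1 < expR 1 :> R by apply: pexpR_gt1.
move: h1 e1 hOPT h2; set e := expR 1; set O := OPT g lam dist k.
set L := lam * D => h1 e1 hOPT h2.
have e0 : 0 < e by apply: lt_trans e1.
have ep : 0 < 2 * e - 1.
  by rewrite subr_gt0 mulr2n mulrDl mul1r; apply: lt_trans e1 _; rewrite ltrDr.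
have em : 0 <= e - 1 by rewrite subr_ge0 ltW.
rewrite mulrAC ler_pdivrMr //.
have h1' : (e - 1) * G <= e * X.
  have -> : (e - 1) * G = e * ((1 - 1 / e) * G).
    by rewrite mulrA mulrBr mulr1 div1r mulfV ?gt_eqF.
  by apply: ler_wpM2l => //; apply: ltW.
have hO : (e - 1) * O <= (e - 1) * G + (e - 1) * L.
  by rewrite -mulrDr; apply: ler_wpM2l.
have h2' : (e - 1) * L <= (e - 1) * X by apply: ler_wpM2l.
have -> : X * (2 * e - 1) = e * X + (e - 1) * X.
  by ring.
apply: le_trans hO _; exact: lerD.
Qed.
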